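(* Let $\mathbb{F}_q$ be a finite field, let $(\star)$ be an arbitrary (not necessarily balanced) linear system over $\mathbb{F}_q$ with coefficient matrix $A\in\mathbb{F}_q^{m\times k}$, and let $b_1,\dots,b_l\in\mathbb{F}_q\setminus\{0\}$ with $b_1+\dots+b_l=0$. Then there are constants $\beta,\gamma\ge1$ with $\gamma<q$ such that, for every $n$ and every subset $S\subseteq\mathbb{F}_q^n$ with $|S|\ge\beta\gamma^n$, there is a linearly generic solution $(y_1,\dots,y_k)$ of $(\star)$ with all $y_j$ in the set $\big(b_1\cdot S\,\dot+_{\mathrm{aff}}\cdots\dot+_{\mathrm{aff}}\,b_l\cdot S\big)\cup\{0\}$.
   Context: For $S_1,\dots,S_l\subseteq\mathbb{F}_q^n$, the affinely independent restricted sumset is $S_1\dot+_{\mathrm{aff}}\cdots\dot+_{\mathrm{aff}}S_l:=\{x_1+\cdots+x_l: x_1\in S_1,\dots,x_l\in S_l \text{ affinely independent}\}$, and $b\cdot S=\{bx:x\in S\}$. A solution of $(\star)$ is a tuple $(y_1,\dots,y_k)\in(\mathbb{F}_q^n)^k$ with $\sum_j a_{ij}y_j=0$ for all $i\in[m]$. It is linearly generic if every linear equation $c_1y_1+\dots+c_ky_k=0$ ($c\in\mathbb{F}_q^k$) that it satisfies has $c$ in the row space of $A$. *)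

(* Defs.v *)
From HB Require Import structures.
From mathcomp Require Import all_boot all_order all_algebra.
From mathcomp Require Import reals.
Set Implicit Arguments. Unset Strict Implicit. Unset Printing Implicit Defensive.
Import Order.TTheory GRing.Theory Num.Theory.
Local Open Scope ring_scope.

Definition scale_set (F : finFieldType) (n : nat) (b : F) (S : {set 'rV[F]_n})
  : {set 'rV[F]_n} := [set b *: x | x in S].

Definition affinely_independent (F : finFieldType) (n l : nat)
  (x : 'I_l -> 'rV[F]_n) : Prop :=
  forall c : 'I_l -> F, \sum_i c i = 0 -> \sum_i c i *: x i = 0 ->
    forall i, c i = 0.

Definition in_aff_sumset (F : finFieldType) (n l : nat)
  (Ss : 'I_l -> {set 'rV[F]_n}) (v : 'rV[F]_n) : Prop :=
  exists x : 'I_l -> 'rV[F]_n,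
    (forall i, x i \in Ss i) /\ affinely_independent x /\ v = \sum_i x i.

(* A tuple (y_1,...,y_k) is encoded as the k x n matrix Y whose j-th row is y_j.
   It solves (star) iff sum_j a_ij y_j = 0 for all i, i.e. A *m Y = 0. *)
Definition is_solution (F : finFieldType) (m k n : nat)
  (A : 'M[F]_(m, k)) (Y : 'M[F]_(k, n)) : Prop := A *m Y = 0.

Definition linearly_generic (F : finFieldType) (m k n : nat)
  (A : 'M[F]_(m, k)) (Y : 'M[F]_(k, n)) : Prop :=
  forall c : 'rV[F]_k, c *m Y = 0 -> (c <= A)%MS.

(* Main.v *)
Require Import Defs.
From HB Require Import structures.
From mathcomp Require Import all_boot all_order all_algebra.
From mathcomp Require Import reals.
From mathcomp Require Import zify ring lra.
Set Implicit Arguments. Unset Strict Implicit. Unset Printing Implicit Defensive.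
Import Order.TTheory GRing.Theory Num.Theory.

Section H1sec.

Lemma amgm_nat (a b : nat) : (2 * (a * b) <= a ^ 2 + b ^ 2)%N.
Proof. case: (leqP a b) => h. - have [c ->] : exists c, b = a + c by exists (b - a); lia. nia. - have [c ->] : exists c, a = b + c by exists (a - b); lia. nia. Qed.

Lemma cs_nat (T : finType) (A : {pred T}) (f : T -> nat) :
  ((\sum_(i in A) f i) ^ 2 <= #|A| * \sum_(i in A) f i ^ 2)%N.
Proof.
rewrite -(leq_pmul2l (isT : 0 < 2)%N).
have -> : ((\sum_(i in A) f i) ^ 2 = \sum_(i in A) \sum_(j in A) f i * f j)%N.
  by rewrite expnS expn1 big_distrl /=; apply: eq_bigr => i _; rewrite big_distrr.
rewrite big_distrr /=.
apply: (@leq_trans (\sum_(i in A) \sum_(j in A) (f i ^ 2 + f j ^ 2))%N).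
  apply: leq_sum => i _; rewrite big_distrr /=; apply: leq_sum => j _; exact: amgm_nat.
under eq_bigr do rewrite big_split /=. rewrite big_split /=. under eq_bigr do rewrite sum_nat_const. rewrite -big_distrr /=.
rewrite sum_nat_const. lia.
Qed.

End H1sec.

Section H2sec.
Local Open Scope ring_scope.

Lemma card_set_sum (T : finType) (P : {set T}) (Q : pred T) :
  #|[set x in P | Q x]| = (\sum_(x in P) (Q x : nat))%N.
Proof.
rewrite -sum1_card big_mkcond /= [RHS]big_mkcond /=.
by apply: eq_bigr => x _; rewrite inE; case: (x \in P); case: (Q x).
Qed.

Lemma card_set_sumT (T : finType) (Q : pred T) :
  #|[set x | Q x]| = (\sum_x (Q x : nat))%N.
Proof.
rewrite -sum1_card big_mkcond /=.
by apply: eq_bigr => x _; rewrite inE; case: (Q x).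
Qed.

Definition shiftX (F : finFieldType) (I : finType) n (m : I -> F) (w : 'rV[F]_n)
  (X : {ffun I -> 'rV[F]_n}) : {ffun I -> 'rV[F]_n} := [ffun c => X c + m c *: w].

Lemma step (F : finFieldType) (I : finType) n (m : I -> F) (c0 : I)
  (P : {set {ffun I -> 'rV[F]_n}}) (Bad : {set 'rV[F]_n}) :
  m c0 = 1 -> (#|Bad| < #|{: 'rV[F]_n}|)%N ->
  exists2 w, w \notin Bad &
   (#|P| ^ 2 * #|{: 'rV[F]_n}| <= #|{: {ffun I -> 'rV[F]_n}}| *
      (#|Bad| * #|P| + #|{: 'rV[F]_n}| * #|[set X in P | shiftX m w X \in P]|))%N.
Proof.
move=> m1 hBad.
pose phi (X : {ffun I -> 'rV[F]_n}) : {ffun I -> 'rV[F]_n} := [ffun c => X c - m c *: X c0].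
pose fib y := #|[set X in P | phi X == y]|.
pose Im := phi @: P.
pose Pw w := #|[set X in P | shiftX m w X \in P]|.
have phishift w X : phi (shiftX m w X) = phi X.
  by apply/ffunP => c; rewrite !ffunE m1 scale1r scalerDr opprD addrACA subrr addr0.
have key : (\sum_w Pw w = \sum_(y in Im) fib y ^ 2)%N.
  rewrite /Pw; under eq_bigr do rewrite card_set_sum.
  rewrite exchange_big /=.
  have e : forall X, X \in P -> (\sum_w (shiftX m w X \in P : nat))%N = fib (phi X).
    move=> X XP.
    rewrite -card_set_sumT /fib.
    have -> : [set X' in P | phi X' == phi X] =
       (fun w => shiftX m w X) @: [set w | shiftX m w X \in P].
      apply/setP => X'; rewrite !inE; apply/andP/imsetP.
        move=> [X'P /eqP hphi].
        have eX : X' = shiftX m (X' c0 - X c0) X.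
          apply/ffunP => c; rewrite !ffunE.
          have := congr1 (fun f : {ffun I -> 'rV[F]_n} => f c) hphi; rewrite !ffunE => h.
          by rewrite scalerBr addrA addrAC -h subrK.
        by exists (X' c0 - X c0); rewrite // inE -eX.
      by move=> [w]; rewrite !inE => hw ->; rewrite hw phishift.
    rewrite card_imset // => w1 w2 e; have := congr1 (fun f : {ffun I -> 'rV[F]_n} => f c0) e; rewrite !ffunE m1 !scale1r.
    by move/addrI.
  rewrite (eq_bigr (fun X => fib (phi X))) //.
  rewrite (partition_big_imset phi) /=.
  apply: eq_bigr => y _.
  rewrite (eq_bigr (fun _ => fib y)); last by move=> X /andP[_ /eqP ->].
  rewrite (eq_bigl (fun X => X \in [set X in P | phi X == y])); last by move=> X; rewrite inE.
  by rewrite sum_nat_const.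
have sumfib : (\sum_(y in Im) fib y = #|P|)%N.
  rewrite -sum1_card [RHS](partition_big_imset phi) /=.
  apply: eq_bigr => y _.
  by rewrite (eq_bigl (fun X => X \in [set X in P | phi X == y])) ?sum1_card // => X; rewrite inE.
have cs := cs_nat Im fib. rewrite sumfib -key in cs.
have cardIm : (#|Im| * #|{: 'rV[F]_n}| <= #|{: {ffun I -> 'rV[F]_n}}|)%N.
  rewrite -cardsT -cardsX.
  pose g (p : {ffun I -> 'rV[F]_n} * 'rV[F]_n) : {ffun I -> 'rV[F]_n} := [ffun c => p.1 c + m c *: p.2].
  rewrite -(@card_in_imset _ _ g); first exact: max_card.
  have Im0 y : y \in Im -> y c0 = 0.
    by move/imsetP=> [X _ ->]; rewrite ffunE m1 scale1r subrr.
  move=> [y1 v1] [y2 v2]; rewrite !inE /= => /andP[h1 _] /andP[h2 _] e.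
  have ev : v1 = v2.
    by have := congr1 (fun f : {ffun I -> 'rV[F]_n} => f c0) e; rewrite !ffunE /= (Im0 _ h1) (Im0 _ h2) m1 !add0r !scale1r.
  subst v2; congr pair; apply/ffunP => c.
  by have := congr1 (fun f : {ffun I -> 'rV[F]_n} => f c) e; rewrite !ffunE /=; move/addIr.
have [w0 w0B] : exists w0, w0 \notin Bad.
  apply/existsP; rewrite -negb_forall; apply/negP => /forallP h.
  have : (#|{: 'rV[F]_n}| <= #|Bad|)%N by apply: subset_leq_card; apply/subsetP => x _; apply: h.
  by rewrite leqNgt hBad.
case: (@arg_maxnP _ w0 (fun w => w \notin Bad) Pw w0B) => w wB wmax.
exists w => //.
have bound : (\sum_w Pw w <= #|Bad| * #|P| + #|{: 'rV[F]_n}| * Pw w)%N.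
  rewrite (bigID (fun w => w \in Bad)) /=; apply: leq_add.
    apply: (@leq_trans (\sum_(w in Bad) #|P|)).
      apply: leq_sum => x _; apply: subset_leq_card; apply/subsetP => X; rewrite inE; by case/andP.
    by rewrite sum_nat_const.
  apply: (@leq_trans (\sum_(x | x \notin Bad) Pw w)).
    by apply: leq_sum => x xB; apply: wmax.
  rewrite (eq_bigl (fun x => x \in ~: Bad)); last by move=> x; rewrite inE.
  by rewrite sum_nat_const leq_mul2r max_card orbT.
apply: (leq_trans (leq_mul cs (leqnn #|{: 'rV[F]_n}|))).
rewrite mulnAC; apply: (leq_trans (leq_mul cardIm (leqnn _))).
by rewrite leq_mul2l bound orbT.
Qed.

End H2sec.

Section H3sec.
Local Open Scope ring_scope.

Lemma arith (R : realType) (Qr Nr p p' b d : R) : 0 < Qr -> 0 < Nr -> 0 <= d -> 0 <= b ->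
  p ^+ 2 * Nr <= Qr * (b * p + Nr * p') -> Qr * d <= p -> 2 * b <= d * Nr ->
  Qr * (d ^+ 2 / 2) <= p'.
Proof.
move=> Q0 N0 d0 b0 H1 H2 H3.
have e0 : 0 <= Qr * d by apply: mulr_ge0 => //; apply: ltW.
have p0 : 0 <= p by apply: le_trans H2.
have h4 : Qr * b * p <= Qr * d * Nr * p / 2.
  have : Qr * (2 * b) * p <= Qr * (d * Nr) * p.
    by apply: ler_wpM2r => //; apply: ler_wpM2l => //; apply: ltW.
  lra.
have hA : 0 <= (p - Qr * d) * (p + Qr * d / 2) * Nr.
  apply: mulr_ge0; last exact: ltW.
  apply: mulr_ge0; lra.
have h6 : Qr * Nr * (Qr * (d ^+ 2 / 2)) <= Qr * Nr * p'.
  rewrite expr2 in H1 *. nra.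
by rewrite ler_pM2l in h6 => //; apply: mulr_gt0.
Qed.

End H3sec.

Section H4sec.
Local Open Scope ring_scope.

Definition dd (R : realType) (x : R) (r : nat) : R := 2 * (x / 2) ^+ (2 ^ r).

Lemma dd_S (R : realType) (x : R) r : dd x r.+1 = dd x r ^+ 2 / 2.
Proof.
rewrite /dd expnS mulnC exprM; set y := (x / 2) ^+ (2 ^ r).
by rewrite expr2 [in RHS]expr2; field.
Qed.

Lemma dd_01 (R : realType) (x : R) r : 0 <= x <= 1 -> 0 <= dd x r <= 1.
Proof.
move=> /andP[x0 x1]; rewrite /dd.
have y0 : 0 <= x / 2 by lra.
have y1 : x / 2 <= 1 / 2 by lra.
have h1 : 0 <= (x / 2) ^+ (2 ^ r) by apply: exprn_ge0.
have h2 : (x / 2) ^+ (2 ^ r) <= x / 2.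
  have := expn_gt0 2 r; case: (2 ^ r)%N => // m _.
  rewrite exprS; rewrite -[leRHS]mulr1; apply: ler_wpM2l => //.
  apply: exprn_ile1 => //; lra.
apply/andP; split; lra.
Qed.

Lemma iter (R : realType) (F : finFieldType) (I G : finType) n (mu : G -> I -> F) (c0 : G -> I)
  (S : {set 'rV[F]_n}) (x0 : R) :
  (forall g, mu g (c0 g) = 1) ->
  0 <= x0 <= 1 ->
  x0 = (#|S|%:R / #|{: 'rV[F]_n}|%:R) ^+ #|I| ->
  forall gs : seq G, uniq gs ->
  2 * (#|F| ^ #|G|)%:R <= dd x0 (size gs) * #|{: 'rV[F]_n}|%:R ->
  exists u : G -> 'rV[F]_n, exists P : {set {ffun I -> 'rV[F]_n}},
   #|{: {ffun I -> 'rV[F]_n}}|%:R * dd x0 (size gs) <= #|P|%:R /\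
   (forall X, X \in P -> forall E : pred G, forall c,
        X c + \sum_(g <- gs | E g) mu g c *: u g \in S) /\
   (forall lam : G -> F, \sum_(g <- gs) lam g *: u g = 0 -> forall g, g \in gs -> lam g = 0).
Proof.
move=> mu1 x01 ex0.
set Nr := (#|{: 'rV[F]_n}|%:R : R).
set Qr := (#|{: {ffun I -> 'rV[F]_n}}|%:R : R).
set Bq := ((#|F| ^ #|G|)%:R : R).
have N0 : 0 < Nr by rewrite ltr0n; apply/card_gt0P; exists 0.
have Q0 : 0 < Qr by rewrite ltr0n; apply/card_gt0P; exists [ffun _ => 0].
have B1 : 1 <= Bq by rewrite ler1n expn_gt0; apply/orP; left; apply/card_gt0P; exists 0.
elim=> [|g gs IH] /=.
  move=> _ _; exists (fun _ => 0), [set X | X \in ffun_on S]; split; last split.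
  - rewrite cardsE card_ffun_on natrX /dd expn0 expr1 /Qr card_ffun natrX ex0.
    have e2 (y : R) : 2 * (y / 2) = y by field.
    rewrite e2 -exprMn mulrC divfK //; exact: lt0r_neq0 N0.
  - by move=> X; rewrite inE => /ffun_onP h E c; rewrite big_nil addr0.
  - by [].
move=> /andP[gnin ugs] H.
have /andP[d0 d1] : 0 <= dd x0 (size gs) <= 1 by apply: dd_01.
have dS : dd x0 (size gs).+1 <= dd x0 (size gs).
  rewrite dd_S; have : dd x0 (size gs) * dd x0 (size gs) <= dd x0 (size gs) * 1.
    by apply: ler_wpM2l.
  rewrite expr2; lra.
have H' : 2 * Bq <= dd x0 (size gs) * Nr.
  apply: (le_trans H); apply: ler_wpM2r => //; exact: ltW.
have [u [P [hp [hprop hind]]]] := IH ugs H'.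
pose Bad := [set \sum_(h <- gs) lam h *: u h | lam : {ffun G -> F}].
have cB : (#|Bad| <= #|F| ^ #|G|)%N.
  by rewrite -card_ffun; apply: leq_imset_card.
have cBR : #|Bad|%:R <= Bq by rewrite ler_nat.
have hB : (#|Bad| < #|{: 'rV[F]_n}|)%N.
  rewrite -(ltr_nat R) -/Nr.
  have : dd x0 (size gs) * Nr <= Nr by rewrite -[leRHS]mul1r; apply: ler_wpM2r => //; exact: ltW.
  lra.
have [w wB hst] := step P (mu1 g) hB.
set P' := [set X in P | shiftX (mu g) w X \in P] in hst.
have hR : #|P|%:R ^+ 2 * Nr <= Qr * (#|Bad|%:R * #|P|%:R + Nr * #|P'|%:R).
  by rewrite -natrX -!natrM -natrD -natrM ler_nat.
have hP' := arith Q0 N0 d0 (ler0n _ _) hR hp (le_trans (ler_wpM2l (ler0n _ 2) cBR) H').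
pose u' := fun h => if h == g then w else u h.
have u'E h : h \in gs -> u' h = u h.
  by move=> hin; rewrite /u'; case: eqP => // ehg; move: gnin; rewrite -ehg hin.
exists u', P'; split; last split.
- by rewrite dd_S.
- move=> X; rewrite inE => /andP[XP sXP] E c.
  rewrite big_cons.
  have -> : \sum_(h <- gs | E h) mu h c *: u' h = \sum_(h <- gs | E h) mu h c *: u h.
    rewrite big_seq_cond [RHS]big_seq_cond; apply: eq_bigr => h /andP[hin _].
    by rewrite u'E.
  case: (E g); last exact: hprop.
  rewrite /u' eqxx addrA.
  by have := hprop _ sXP E c; rewrite ffunE.
- move=> lam; rewrite big_cons.
  have -> : \sum_(h <- gs) lam h *: u' h = \sum_(h <- gs) lam h *: u h.
    by rewrite big_seq [RHS]big_seq; apply: eq_bigr => h hin; rewrite u'E.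
  rewrite /u' eqxx => hs.
  have lg : lam g = 0.
    apply/eqP; apply/negP => /negP lg0; move: wB; apply/negP; rewrite negbK.
    apply/imsetP; exists [ffun h => - (lam g)^-1 * lam h] => //.
    rewrite (eq_bigr (fun h => - (lam g)^-1 *: (lam h *: u h))); last first.
      by move=> h _; rewrite ffunE scalerA.
    rewrite -scaler_sumr.
    have -> : \sum_(h <- gs) lam h *: u h = - (lam g *: w) by apply/eqP; rewrite -addr_eq0 addrC hs.
    by rewrite scalerN scaleNr opprK scalerA mulVf // scale1r.
  move: hs; rewrite lg scale0r add0r => hs h; rewrite inE => /orP[/eqP -> //|hin].
  exact: hind.
Qed.

End H4sec.

Section H5sec.
Local Open Scope ring_scope.

Lemma card_bigcup_le (T I : finType) (p : pred I) (A : I -> {set T}) :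
  (#|\bigcup_(c | p c) A c| <= \sum_(c | p c) #|A c|)%N.
Proof.
elim/big_rec2: _ => [|c s U pc h]; first by rewrite cards0.
apply: leq_trans (leq_add (leqnn #|A c|) h).
exact: (leq_card_setU (A c) U).1.
Qed.

Lemma card_coord (F : finFieldType) (I : finType) n (c : I) (T : {set 'rV[F]_n}) :
  (#|[set X : {ffun I -> 'rV[F]_n} | X c \in T]| * #|{: 'rV[F]_n}| <=
     #|{: {ffun I -> 'rV[F]_n}}| * #|T|)%N.
Proof.
rewrite -[#|{: 'rV[F]_n}|]cardsT -[#|{: {ffun I -> 'rV[F]_n}}|]cardsT -!cardsX.
pose h (p : {ffun I -> 'rV[F]_n} * 'rV[F]_n) :=
  ([ffun c' => if c' == c then p.2 else p.1 c'], p.1 c).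
rewrite -(@card_in_imset _ _ h).
  apply: subset_leq_card; apply/subsetP => q /imsetP[[X v]]; rewrite !inE /= => /andP[Xc _] ->.
  by rewrite /h /= Xc.
move=> [X1 v1] [X2 v2] _ _ [e1 e2]; simpl in e2.
have ev : v1 = v2.
  by have := congr1 (fun f : {ffun I -> 'rV[F]_n} => f c) e1; rewrite !ffunE eqxx.
subst v2; congr pair; apply/ffunP => c'.
case: (eqVneq c' c) => [->//|ne].
by have := congr1 (fun f : {ffun I -> 'rV[F]_n} => f c') e1; rewrite !ffunE (negbTE ne).
Qed.

End H5sec.

Section H6sec.
Local Open Scope ring_scope.

Lemma rV_neq0 (F : fieldType) k (c : 'rV[F]_k) : c != 0 -> exists t, c 0 t != 0.
Proof.
move=> cn; apply/existsP; apply: contraR cn; rewrite negb_exists => /forallP h.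
by apply/eqP/matrixP => i j; rewrite ord1 mxE; apply/eqP; move: (h j); rewrite negbK.
Qed.

Lemma core (R : realType) (F : finFieldType) k l (b : 'I_l -> F) n (S : {set 'rV[F]_n}) :
  (0 < l)%N -> (forall i, b i != 0) -> \sum_i b i = 0 ->
  2 * ((#|F| ^ #|{: 'I_k * 'I_l}|) * (#|F| ^ l) * #|{: 'rV[F]_k}|)%:R <=
     dd ((#|S|%:R / #|{: 'rV[F]_n}|%:R) ^+ #|{: 'rV[F]_k}| : R) #|{: 'I_k * 'I_l}|
      * #|{: 'rV[F]_n}|%:R ->
  exists Z : 'M[F]_(k, n), (forall c : 'rV_k, c *m Z = 0 -> c = 0) /\
    forall c : 'rV_k, c != 0 -> in_aff_sumset (fun i => scale_set (b i) S) (c *m Z).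
Proof.
move=> l0 bn0 bsum.
set x0 := (_ ^+ _ : R).
set Nr := (#|{: 'rV[F]_n}|%:R : R).
set Qr := (#|{: {ffun 'rV[F]_k -> 'rV[F]_n}}|%:R : R).
set D := #|{: 'I_k * 'I_l}|.
move=> H.
have N0 : 0 < Nr by rewrite ltr0n; apply/card_gt0P; exists 0.
have Q0 : 0 < Qr by rewrite ltr0n; apply/card_gt0P; exists [ffun _ => 0].
have x01 : 0 <= x0 <= 1.
  rewrite /x0; apply/andP; split; first by apply: exprn_ge0; apply: divr_ge0.
  apply: exprn_ile1; first by apply: divr_ge0.
  by rewrite ler_pdivrMr // mul1r ler_nat max_card.
pose mu (g : 'I_k * 'I_l) (c : 'rV[F]_k) := c 0 g.1.
pose c0 (g : 'I_k * 'I_l) : 'rV[F]_k := delta_mx 0 g.1.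
have mu1 g : mu g (c0 g) = 1 by rewrite /mu /c0 mxE !eqxx.
have qF : (0 < #|F|)%N by apply/card_gt0P; exists 0.
have H2 : 2 * (#|F| ^ #|{: 'I_k * 'I_l}|)%:R <= dd x0 (size (enum [set: 'I_k * 'I_l])) * Nr.
  rewrite -cardE cardsT; apply: le_trans H; apply: ler_wpM2l => //; rewrite ler_nat -mulnA.
  by apply: leq_pmulr; rewrite muln_gt0 expn_gt0 qF /=; apply/card_gt0P; exists 0.
have [u [P [hp [hprop hind]]]] := iter mu1 x01 erefl (enum_uniq _) H2.
have hprop' : forall X, X \in P -> forall (E : pred ('I_k * 'I_l)) c,
    X c + \sum_(g | E g) mu g c *: u g \in S.
  move=> X XP E c; have := hprop X XP E c; rewrite big_enum_cond /=.
  by rewrite (eq_bigl (fun g => E g)) // => g; rewrite in_setT.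
have hind' : forall lam : 'I_k * 'I_l -> F, \sum_g lam g *: u g = 0 -> forall g, lam g = 0.
  move=> lam hs g; apply: hind; last by rewrite mem_enum in_setT.
  by rewrite big_enum /= (eq_bigl (fun g => true)) // => h; rewrite in_setT.
pose v (c : 'rV[F]_k) (i : 'I_l) := \sum_(g | g.2 == i) mu g c *: u g.
have vS X c i : X \in P -> X c + v c i \in S by move=> XP; apply: hprop'.
have sumv (kap : 'I_l -> F) c :
    \sum_i kap i *: v c i = \sum_g (kap g.2 * c 0 g.1) *: u g.
  rewrite [RHS](partition_big (fun g => g.2) predT) //=.
  apply: eq_bigr => i _; rewrite scaler_sumr; apply: eq_bigr => g /eqP <-.
  by rewrite scalerA mulrC.
pose Z : 'M[F]_(k, n) := \matrix_(t < k) \sum_(g | g.1 == t) b g.2 *: u g.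
have cZ c : c *m Z = \sum_g (b g.2 * c 0 g.1) *: u g.
  rewrite mulmx_sum_row [RHS](partition_big (fun g => g.1) predT) //=.
  apply: eq_bigr => t _; rewrite rowK scaler_sumr; apply: eq_bigr => g /eqP <-.
  by rewrite scalerA mulrC.
pose spanv c := [set \sum_i kap i *: v c i | kap : {ffun 'I_l -> F}].
pose BX := \bigcup_(c | c != 0) [set X : {ffun 'rV[F]_k -> 'rV[F]_n} | X c \in spanv c].
have [X XP XBX] : exists2 X, X \in P & X \notin BX.
  case: (boolP [exists (X | X \in P), X \notin BX]) => [/exists_inP //|]; rewrite negb_exists_in => /forall_inP hall; exfalso.
  have PB : (#|P| <= #|BX|)%N by apply: subset_leq_card; apply/subsetP => X /hall; rewrite negbK.
  have cb : (#|BX| * #|{: 'rV[F]_n}| <= #|{: 'rV[F]_k}| * (#|{: {ffun 'rV[F]_k -> 'rV[F]_n}}| * #|F| ^ l))%N.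
    apply: (leq_trans (leq_mul (card_bigcup_le _ _) (leqnn _))).
    rewrite big_distrl /= -sum_nat_const big_mkcond /=; apply: leq_sum => c _.
    case: (c != 0) => //.
    apply: (leq_trans (card_coord _ _)); rewrite leq_mul2l; apply/orP; right.
    by rewrite -[l]card_ord -card_ffun; apply: leq_imset_card.
  have hpD : Qr * dd x0 D <= #|P|%:R by move: hp; rewrite -cardE cardsT.
  have : Qr * dd x0 D * Nr <= (#|{: 'rV[F]_k}| * (#|{: {ffun 'rV[F]_k -> 'rV[F]_n}}| * #|F| ^ l))%:R.
    apply: (le_trans _ (eqbRL (ler_nat _ _ _) cb)); rewrite natrM.
    apply: ler_wpM2r; first exact: ltW.
    by apply: (le_trans hpD); rewrite ler_nat.
  rewrite !natrM -/Qr => h2.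
  have qD : 1 <= (#|F| ^ D)%:R :> R by rewrite ler1n expn_gt0 qF.
  have a0 : 0 < ((#|F| ^ l) * #|{: 'rV[F]_k}|)%:R :> R.
    by rewrite ltr0n muln_gt0 expn_gt0 qF /=; apply/card_gt0P; exists 0.
  move: H; rewrite -/D !natrM => H.
  set a := #|{: 'rV[F]_k}|%:R in h2 H a0; set ql := (#|F| ^ l)%:R in h2 H a0.
  set d := dd x0 D in h2 H.
  rewrite natrM in a0.
  have h3 : Qr * (d * Nr) <= Qr * (a * ql) by move: h2; rewrite -mulrA [a * (Qr * ql)]mulrCA.
  rewrite ler_pM2l // in h3.
  have : (#|F| ^ D)%:R * ql * a * 2 >= ql * a * 2 by rewrite -!mulrA ler_peMl // ?mulr_ge0 //; lra.
  nra.
exists Z; split.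
  move=> c; rewrite cZ => /hind' hc; apply/matrixP => i t; rewrite ord1 mxE.
  have := hc (t, Ordinal l0); move/eqP; rewrite mulf_eq0 (negbTE (bn0 _)) /=.
  by move/eqP.
move=> c cn.
have Xn : X c \notin spanv c.
  apply/negP => Xs; move: XBX; apply/negP; rewrite negbK.
  by apply/bigcupP; exists c => //; rewrite inE.
exists (fun i => b i *: (X c + v c i)); split; [|split].
- by move=> i; rewrite /scale_set; apply: imset_f; exact: vS.
- move=> lam _ hs i.
  pose kap i := lam i * b i.
  have hs' : (\sum_i kap i) *: X c + \sum_i kap i *: v c i = 0.
    rewrite -[RHS]hs scaler_suml -big_split /=; apply: eq_bigr => j _.
    by rewrite scalerA scalerDr.
  have s0 : \sum_i kap i = 0.
    apply/eqP; apply/negP => /negP sn; move: Xn; apply/negP; rewrite negbK.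
    apply/imsetP; exists [ffun i => - (\sum_j kap j)^-1 * kap i] => //.
    rewrite (eq_bigr (fun i => - (\sum_j kap j)^-1 *: (kap i *: v c i))); last first.
      by move=> j _; rewrite ffunE scalerA.
    rewrite -scaler_sumr.
    have -> : \sum_i kap i *: v c i = - ((\sum_j kap j) *: X c).
      by apply/eqP; rewrite -addr_eq0 addrC hs'.
    by rewrite scalerN scaleNr opprK scalerA mulVf // scale1r.
  move: hs'; rewrite s0 scale0r add0r sumv => /hind' hk.
  have [t ct] := rV_neq0 cn.
  have := hk (t, i); move/eqP; rewrite mulf_eq0 (negbTE ct) orbF /kap mulf_eq0.
  by rewrite (negbTE (bn0 i)) orbF => /eqP.
- rewrite cZ; under [RHS]eq_bigr do rewrite scalerDr.
  by rewrite big_split /= -scaler_suml bsum scale0r add0r sumv.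
Qed.

End H6sec.

Section H7sec.
Local Open Scope ring_scope.

Lemma bernoulli (R : realType) (x : R) K : 0 <= x <= 1 -> 1 - K%:R * x <= (1 - x) ^+ K.
Proof.
move=> /andP[x0 x1]; elim: K => [|K IH]; first by rewrite mul0r subr0 expr0.
rewrite exprSr.
have h : (1 - K%:R * x) * (1 - x) <= (1 - x) ^+ K * (1 - x).
  apply: ler_wpM2r => //; lra.
have Kx : 0 <= K%:R * x ^+ 2 by apply: mulr_ge0 => //; apply: sqr_ge0.
rewrite -natr1; apply: le_trans h; rewrite expr2 in Kx; nra.
Qed.

Lemma numeric (R : realType) (q s beta : R) K n : 2 <= q -> (0 < K)%N -> 1 <= beta -> 0 <= s ->
  beta * (q - q / (2 * K%:R)) ^+ n <= s * q ^+ n -> beta <= s ^+ K * q ^+ n.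
Proof.
move=> q2 K0 b1 s0 H.
have K1 : 1 <= K%:R :> R by rewrite ler1n.
pose r : R := 1 - 1 / (2 * K%:R).
have ra : 0 <= 1 / (2 * K%:R) :> R by rewrite div1r invr_ge0; lra.
have rb : 1 / (2 * K%:R) <= 1 :> R by rewrite ler_pdivrMr ?mul1r; lra.
have r0 : (0 <= 1 / (2 * K%:R) :> R) && (1 / (2 * K%:R) <= 1 :> R) by rewrite ra rb.
have rr : 1/2 <= r ^+ K.
  apply: le_trans (bernoulli _ r0).
  have e : K%:R * (1 / (2 * K%:R)) = 1/2 :> R by field; rewrite pnatr_eq0 -lt0n K0. rewrite e; lra.
have rpos : 0 <= r by rewrite /r; lra.
have qn : 0 < q ^+ n by apply: exprn_gt0; lra.
have e : q - q / (2 * K%:R) = q * r by rewrite /r mulrBr mulr1 mulrA mulr1.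
rewrite e exprMn mulrCA [s * _]mulrC ler_pM2l // in H.
have h1 : (beta * r ^+ n) ^+ K <= s ^+ K.
  apply: lerXn2r => //; rewrite ?nnegrE //; apply: mulr_ge0; [lra|exact: exprn_ge0].
rewrite exprMn -exprM mulnC exprM in h1.
have h2 : (1/2) ^+ n <= (r ^+ K) ^+ n by apply: lerXn2r => //; rewrite nnegrE; lra.
have bK : beta <= beta ^+ K by apply: ler_eXnr.
have h3 : 1 <= (q / 2) ^+ n by apply: exprn_ege1; lra.
have h4 : beta ^+ K * (1 / 2) ^+ n * q ^+ n <= s ^+ K * q ^+ n.
  apply: ler_wpM2r; first exact: ltW.
  apply: le_trans h1; apply: ler_wpM2l => //; apply: exprn_ge0; lra.
apply: le_trans h4; rewrite -mulrA -exprMn mul1r mulrC.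
have bK0 : 0 <= beta ^+ K by apply: exprn_ge0; lra.
rewrite -[X in X <= _]mul1r; apply: ler_pM => //; [lra | by rewrite mulrC].

Qed.

Lemma fin_arith (R : realType) (B sK N t : R) : 0 < t -> t * B <= sK * N ->
  2 * B <= 2 * (sK / t) * N.
Proof.
move=> t0 hb.
have h1 : B <= sK * N / t by rewrite (ler_pdivlMr _ _ t0) mulrC.
have -> : 2 * (sK / t) * N = 2 * (sK * N / t) by rewrite -!mulrA [t^-1 * N]mulrC.
lra.
Qed.

End H7sec.

Unset Implicit Arguments. Set Strict Implicit.
Local Open Scope ring_scope.

Theorem corollaryD (R : realType) (F : finFieldType) (m k l : nat)
  (A : 'M[F]_(m, k)) (b : 'I_l -> F) :
  (0 < l)%N ->
  (forall i, b i != 0) ->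
  \sum_i b i = 0 ->
  exists beta gamma : R,
    1 <= beta /\ 1 <= gamma /\ gamma < #|F|%:R /\
    forall (n : nat) (S : {set 'rV[F]_n}),
      beta * gamma ^+ n <= #|S|%:R ->
      exists Y : 'M[F]_(k, n),
        is_solution A Y /\ linearly_generic A Y /\
        forall j : 'I_k,
          in_aff_sumset (fun i => scale_set (b i) S) (row j Y) \/ row j Y = 0.
Proof.
move=> l0 bn0 bsum.
have q2 : (1 < #|F|)%N by apply/card_gt1P; exists 0, 1; split => //; rewrite eq_sym oner_neq0.
set q := #|F| in q2 *.
set D := #|{: 'I_k * 'I_l}|.
set a := #|{: 'rV[F]_k}|.
have a0 : (0 < a)%N by apply/card_gt0P; exists 0.
set K := (a * 2 ^ D)%N.
have K0 : (0 < K)%N by rewrite muln_gt0 a0 expn_gt0.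
set B' := (q ^ D * q ^ l * a)%N.
have q0 : (0 < q)%N by lia.
have B0 : (0 < B')%N by rewrite /B' !muln_gt0 !expn_gt0 q0 /=.
have qR : 2 <= q%:R :> R by rewrite ler_nat.
have KR : 1 <= K%:R :> R by rewrite ler1n.
have qK : 0 < q%:R / (2 * K%:R) :> R by apply: divr_gt0; lra.
have qK2 : q%:R / (2 * K%:R) <= q%:R / 2 :> R.
  rewrite ler_pdivrMr; last lra.
  have -> : q%:R / 2 * (2 * K%:R) = q%:R * K%:R :> R by field.
  by rewrite -[X in X <= _]mulr1; apply: ler_wpM2l => //; lra.
exists (2 ^ (2 ^ D) * B')%:R, (q%:R - q%:R / (2 * K%:R)).
split; [|split; [|split]].
- by rewrite ler1n muln_gt0 expn_gt0 B0.
- lra.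
- lra.
move=> n S hS.
set Nr := #|{: 'rV[F]_n}|%:R : R.
have Nq : Nr = q%:R ^+ n by rewrite /Nr card_mx mul1n natrX.
have N0 : 0 < Nr by rewrite Nq exprn_gt0 //; lra.
set s := #|S|%:R / Nr.
have s0 : 0 <= s by apply: divr_ge0 => //; exact: ltW.
have hS' : (2 ^ (2 ^ D) * B')%:R * (q%:R - q%:R / (2 * K%:R)) ^+ n <= s * q%:R ^+ n.
  by rewrite /s -Nq divfK // lt0r_neq0.
have b1 : 1 <= (2 ^ (2 ^ D) * B')%:R :> R by rewrite ler1n muln_gt0 expn_gt0 B0.
have hb := numeric qR K0 b1 s0 hS'.
have Hcore : 2 * B'%:R <= dd (s ^+ a) D * Nr.
  rewrite /dd expr_div_n -(exprM s) -/K.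
  move: hb; rewrite (natrM _ (2 ^ 2 ^ D) B') (natrX _ 2 (2 ^ D)) -Nq => hb.
  have t0 : 0 < (2 : R) ^+ (2 ^ D) by apply: exprn_gt0; rewrite ltr0n.
  exact: fin_arith t0 hb.
have [Z [Zinj Zaff]] := core l0 bn0 bsum Hcore.
exists (cokermx A *m Z); split; [|split].
- by rewrite /is_solution mulmxA mulmx_coker mul0mx.
- by move=> c; rewrite mulmxA => /Zinj h; rewrite submxE h eqxx.
- move=> j; rewrite row_mul; case: (eqVneq (row j (cokermx A)) 0) => [->|ne].
    by right; rewrite mul0mx.
  by left; apply: Zaff.
Qed.
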